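(* Let $A$ be a partially symmetric 0-dialgebra. Then for all $x,y\in A$, $\mathrm{sym}(x\dashv y^\ast)=\mathrm{sym}(x^\ast\dashv y)$ and $\mathrm{sym}(x\dashv y)=\mathrm{sym}(x^\ast\dashv y^\ast)$.
   Context: A 0-dialgebra with involution is a vector space with bilinear operations $\dashv,\vdash$ satisfying $a\dashv(b\dashv c)=a\dashv(b\vdash c)$ and $(a\dashv b)\vdash c=(a\vdash b)\vdash c$, together with a linear map $\ast$ with $(a^\ast)^\ast=a$, $(a\dashv b)^\ast=b^\ast\vdash a^\ast$, $(a\vdash b)^\ast=b^\ast\dashv a^\ast$. Write $\mathrm{sym}(x)=x+x^\ast$ and $\{x,y\}=x\dashv y-y\vdash x$. Such a structure is partially symmetric if $\{\mathrm{sym}(x),y\}=0$ and $\{x,\mathrm{sym}(y)\}=0$ for all $x,y$. *)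

(* Defs.v *)
From HB Require Import structures.
From mathcomp Require Import all_boot all_algebra.
Set Implicit Arguments. Unset Strict Implicit. Unset Printing Implicit Defensive.
Import GRing.Theory.
Local Open Scope ring_scope.

(* A 0-dialgebra with involution over a field F, on a vector space V:
   lt = "⊣", rt = "⊢", star = involution. *)
Definition bilinear_op (F : fieldType) (V : lmodType F) (op : V -> V -> V) :=
  (forall a x y z, op (a *: x + y) z = a *: op x z + op y z) /\
  (forall a x y z, op x (a *: y + z) = a *: op x y + op x z).

Definition is_0_dialgebra_inv (F : fieldType) (V : lmodType F)
    (lt rt : V -> V -> V) (star : V -> V) :=
  [/\ bilinear_op lt, bilinear_op rt,
      (forall a x y, star (a *: x + y) = a *: star x + star y),
      (forall a b c, lt a (lt b c) = lt a (rt b c)) &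
      (forall a b c, rt (lt a b) c = rt (rt a b) c)] /\
  [/\ (forall a, star (star a) = a),
      (forall a b, star (lt a b) = rt (star b) (star a)) &
      (forall a b, star (rt a b) = lt (star b) (star a))].

Definition sym (F : fieldType) (V : lmodType F) (star : V -> V) (x : V) : V :=
  x + star x.

Definition dibracket (F : fieldType) (V : lmodType F) (lt rt : V -> V -> V)
  (x y : V) : V := lt x y - rt y x.

Definition partially_symmetric (F : fieldType) (V : lmodType F)
    (lt rt : V -> V -> V) (star : V -> V) :=
  (forall x y : V, dibracket lt rt (sym star x) y = 0) /\
  (forall x y : V, dibracket lt rt x (sym star y) = 0).

(* Main.v *)
Require Import Defs.
From mathcomp Require Import all_boot all_algebra.
Import GRing.Theory.
Local Open Scope ring_scope.

Lemma sub_cross (V : zmodType) (x y z w : V) : x - y = z - w -> x + w = z + y.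
Proof. by move=> h; rewrite -(subrK y x) h addrAC subrK. Qed.
Lemma eq_sub (V : zmodType) (x y z w : V) : x + y = z + w -> x - z = w - y.
Proof. by move=> h; rewrite -[x](addrK y) h addrAC [z + w]addrC addrK. Qed.

Theorem lemma5p2 (F : fieldType) (V : lmodType F)
    (lt rt : V -> V -> V) (star : V -> V) :
  is_0_dialgebra_inv lt rt star ->
  partially_symmetric lt rt star ->
  forall x y : V,
    sym star (lt x (star y)) = sym star (lt (star x) y) /\
    sym star (lt x y) = sym star (lt (star x) (star y)).
Proof.
move=> [[[ltl ltr] [rtl rtr] _ _ _] [ss sl sr]] [P1 P2] x y.
have ltD : forall u v w, lt (u + v) w = lt u w + lt v w.
  by move=> u v w; have := ltl 1 u v w; rewrite !scale1r.
have rtD : forall u v w, rt w (u + v) = rt w u + rt w v.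
  by move=> u v w; have := rtr 1 w u v; rewrite !scale1r.
have ltR : forall u v w, lt w (u + v) = lt w u + lt w v.
  by move=> u v w; have := ltr 1 w u v; rewrite !scale1r.
have rtL : forall u v w, rt (u + v) w = rt u w + rt v w.
  by move=> u v w; have := rtl 1 u v w; rewrite !scale1r.
have h1 := P1 x y; have h1' := P1 x (star y).
have h2 := P2 (star x) y; have h2' := P2 (star x) (star y).
move: h1 h1' h2 h2'; rewrite /dibracket /sym ss ltD rtD ltD rtD.
rewrite /sym !sl ss.
move=> h1 h1' h2 h2'.
rewrite !ltR !rtL ss in h2 h2' *.
set a := lt x (star y) in h1' *; set b := lt (star x) (star y) in h1' h2 h2' *.
set c := rt (star y) x in h1' *; set d := rt (star y) (star x) in h1' h2 h2' *.
set e := lt (star x) y in h2 h2' *; set f := rt y (star x) in h2 h2' *.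
move/eqP: h1'; rewrite subr_eq0 => /eqP /eq_sub h1'.
move/eqP: h2'; rewrite subr_eq0 addrC => /eqP /eq_sub h2'.
move/eqP: h2; rewrite subr_eq0 => /eqP /eq_sub h2.
set g := lt x y in h1 *; set k := rt y x in h1 *.
move/eqP: h1; rewrite subr_eq0 => /eqP /eq_sub h1.
split; apply: sub_cross.
  by rewrite h1' h2.
by rewrite h1 -opprB h2 opprB.
Qed.
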